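(* Let $N\ge 0$ be an integer, let $\mathcal{H}_N$ be a complex inner-product space of dimension $N+1$ with orthonormal basis $|\Psi_0\rangle,\dots,|\Psi_N\rangle$, and let $\beta_0,\dots,\beta_{N-1}>0$ be real numbers, with $\beta_N=0$. Let $\hat A$ be the linear operator on $\mathcal{H}_N$ defined by $\hat A|\Psi_0\rangle=0$ and $\hat A|\Psi_{n+1}\rangle=\sqrt{\beta_n}\,|\Psi_n\rangle$ for $0\le n\le N-1$, and let $\hat A^\dagger$ be its adjoint, so that $\hat A^\dagger|\Psi_n\rangle=\sqrt{\beta_n}\,|\Psi_{n+1}\rangle$ for $0\le n\le N-1$ and $\hat A^\dagger|\Psi_N\rangle=0$. Then for every integer $m\ge 0$, $$(\hat A+\hat A^\dagger)^m|\Psi_0\rangle=\sum_{l=0}^{[m/2]} c_{m,l}\,(\hat A^\dagger)^{m-2l}|\Psi_0\rangle,$$ where $[\cdot]$ denotes the integer part, $c_{m,0}=1$, and for $l\ge 1$ $$c_{m,l}=\sum_{s_1=0}^{s_0+1}\beta_{s_1}\sum_{s_2=0}^{s_1+1}\beta_{s_2}\cdots\sum_{s_l=0}^{s_{l-1}+1}\beta_{s_l},\qquad s_0\equiv m-2l-1,$$ i.e. $c_{m,l}=\sum_{s_1=0}^{m-2l}\beta_{s_1}\sum_{s_2=0}^{s_1+1}\beta_{s_2}\cdots\sum_{s_l=0}^{s_{l-1}+1}\beta_{s_l}$ (nested sums, each $\beta_{s_j}$ multiplying all inner sums).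
   Context: This is the abstract form of a boson interaction model: the interaction Hamiltonian restricted to a finite-dimensional invariant subspace is $\hat A+\hat A^\dagger$, where the ladder operator $\hat A$ acts by nearest-neighbour transitions with squared matrix elements $\beta_n$. Convention: $\beta_s$ is set to $0$ for all integers $s\ge N$ (such indices only occur in terms that multiply $(\hat A^\dagger)^{k}|\Psi_0\rangle$ with $k>N$, which is the zero vector). *)

(* Defs.v *)
(* The (N+1)-dimensional complex inner-product space with
   orthonormal basis Psi_0..Psi_N is modelled by column vectors 'cV[C]_(N.+1)
   over a numeric closed field C (e.g. complex numbers), Psi_n being the
   n-th standard basis vector; operators are matrices acting on the left. *)
From HB Require Import structures.
From mathcomp Require Import all_boot all_order all_algebra.
Set Implicit Arguments. Unset Strict Implicit. Unset Printing Implicit Defensive.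
Import Order.TTheory GRing.Theory Num.Theory.
Local Open Scope ring_scope.

Definition Psi {C : numClosedFieldType} (N n : nat) : 'cV[C]_(N.+1) :=
  delta_mx (inord n) 0.

(* adjoint w.r.t. the standard inner product (basis orthonormal):
   conjugate transpose *)
Definition adjoint {C : numClosedFieldType} (N : nat) (A : 'M[C]_(N.+1)) :
  'M[C]_(N.+1) := (map_mx Num.conj A)^T.

Fixpoint nested {C : numClosedFieldType} (beta : nat -> C) (k s : nat) : C :=
  match k with
  | 0 => 1
  | k'.+1 => \sum_(t < s.+2) beta t * nested beta k' t
  end.

Definition coef {C : numClosedFieldType} (beta : nat -> C) (m l : nat) : C :=
  match l with
  | 0 => 1
  | l'.+1 => \sum_(s1 < (m - 2 * l).+1) beta s1 * nested beta l' s1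
  end.

(* Main.v *)
Require Import Defs.
From HB Require Import structures.
From mathcomp Require Import all_boot all_order all_algebra.
Import Order.TTheory GRing.Theory Num.Theory.
Set Implicit Arguments. Unset Strict Implicit.
Local Open Scope ring_scope.

Lemma beta_ge0 (C : numClosedFieldType) (N : nat) (beta : nat -> C)
  (hpos : forall n : nat, (n < N)%N -> 0 < beta n)
  (hzero : forall s : nat, (N <= s)%N -> beta s = 0) n : 0 <= beta n.
Proof. case: (ltnP n N) => h; [exact: ltW (hpos _ h)| by rewrite hzero]. Qed.

Lemma Aent (C : numClosedFieldType) (N : nat) (beta : nat -> C)
  (A : 'M[C]_(N.+1))
  (hA0 : A *m Psi N 0 = 0)
  (hA : forall n : nat, (n < N)%N ->
          A *m Psi N n.+1 = sqrtC (beta n) *: Psi N n)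
  (i j : 'I_N.+1) :
  A i j = if (j : nat) is k.+1 then sqrtC (beta k) * (i == k :> nat)%:R else 0.
Proof.
have -> : A i j = (A *m Psi N j) i 0 by rewrite /Psi inord_val -colE mxE.
case: j => [[|k] Hk] /=.
  by rewrite hA0 mxE.
rewrite hA // mxE /Psi mxE.
rewrite -val_eqE /= inordK; last by apply: ltnW.
by rewrite eqxx andbT.
Qed.

Lemma Bpsi (C : numClosedFieldType) (N : nat) (beta : nat -> C)
  (hpos : forall n : nat, (n < N)%N -> 0 < beta n)
  (hzero : forall s : nat, (N <= s)%N -> beta s = 0)
  (A : 'M[C]_(N.+1))
  (hA0 : A *m Psi N 0 = 0)
  (hA : forall n : nat, (n < N)%N ->
          A *m Psi N n.+1 = sqrtC (beta n) *: Psi N n) n :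
  (n <= N)%N ->
  adjoint A *m Psi N n = sqrtC (beta n) *: Psi N n.+1.
Proof.
move=> hn; case: (ltnP n N) => hnN.
  apply/matrixP => i j; rewrite ord1.
  rewrite /Psi -colE !mxE (Aent hA0 hA).
  rewrite -val_eqE /= inordK; last by [].
  rewrite -val_eqE /= inordK; last by [].
  case: i => [[|i] Hi] /=.
  by rewrite rmorph0 mulr0.
  rewrite eqSS eqxx andbT [n == i]eq_sym; case: (i =P n) => [->|_]; last by rewrite !mulr0 rmorph0.
  by rewrite !mulr1 geC0_conj ?sqrtC_ge0 ?(beta_ge0 hpos hzero).
have -> : n = N by apply/eqP; rewrite eqn_leq hn hnN.
rewrite hzero // sqrtC0 scale0r.
apply/matrixP => i j; rewrite ord1.
rewrite /Psi -colE !mxE (Aent hA0 hA).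
case: i => [[|i] Hi] /=; first by rewrite rmorph0.
rewrite inordK //.
have -> : (N == i) = false by apply/negbTE; rewrite ltnS in Hi; rewrite neq_ltn Hi orbT.
by rewrite mulr0 rmorph0.
Qed.

Definition cc (C : numClosedFieldType) (beta : nat -> C) (l j : nat) : C :=
  if l is l'.+1 then \sum_(s < j.+1) beta s * nested beta l' s else 1.

Lemma L0 (C : numClosedFieldType) (beta : nat -> C) l j :
  nested beta l j = cc beta l j.+1.
Proof. by case: l. Qed.

Lemma L1 (C : numClosedFieldType) (beta : nat -> C) l j :
  cc beta l.+1 j.+1 = cc beta l.+1 j + beta j.+1 * cc beta l j.+2.
Proof. by rewrite /= big_ord_recr /= L0. Qed.

Lemma L2 (C : numClosedFieldType) (beta : nat -> C) l :
  cc beta l.+1 0 = beta 0 * cc beta l 1.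
Proof. by rewrite /= big_ord1 L0. Qed.

Definition gg (C : numClosedFieldType) (beta : nat -> C) (m l : nat) : C :=
  if (2 * l <= m)%N then cc beta l (m - 2 * l) else 0.

Definition Avf (C : numClosedFieldType) (V : lmodType C) (beta : nat -> C)
  (v : nat -> V) (j : nat) : V :=
  if j is j'.+1 then beta j' *: v j' else 0.

From mathcomp Require Import zify.

Lemma term (C : numClosedFieldType) (V : lmodType C) (beta : nat -> C)
  (v : nat -> V) m l :
  gg beta m.+1 l.+1 *: v (m.+1 - 2 * l.+1)%N =
  gg beta m l.+1 *: v (m - 2 * l.+1)%N.+1 + gg beta m l *: Avf beta v (m - 2 * l)%N.
Proof.
rewrite /gg.
case: (ltnP (2 * l + 1) m) => h.
  have [j ->] : exists j, m = (2 * l + 2 + j)%N by exists (m - (2 * l + 2))%N; lia.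
  have -> : (2 * l.+1 <= (2 * l + 2 + j).+1)%N by lia.
  have -> : (2 * l.+1 <= (2 * l + 2 + j))%N by lia.
  have -> : (2 * l <= (2 * l + 2 + j))%N by lia.
  have -> : ((2 * l + 2 + j).+1 - 2 * l.+1 = j.+1)%N by lia.
  have -> : ((2 * l + 2 + j) - 2 * l.+1 = j)%N by lia.
  have -> : ((2 * l + 2 + j) - 2 * l = j.+2)%N by lia.
  by rewrite L1 scalerDl scalerA mulrC.
case: (eqVneq m (2 * l + 1)%N) => [->|hm].
  have -> : (2 * l.+1 <= (2 * l + 1).+1)%N by lia.
  have -> : (2 * l.+1 <= (2 * l + 1))%N = false by lia.
  have -> : (2 * l <= (2 * l + 1))%N by lia.
  have -> : ((2 * l + 1).+1 - 2 * l.+1 = 0)%N by lia.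
  have -> : ((2 * l + 1) - 2 * l = 1)%N by lia.
  by rewrite L2 scale0r add0r scalerA mulrC.
have -> : (2 * l.+1 <= m.+1)%N = false by lia.
have -> : (2 * l.+1 <= m)%N = false by lia.
have -> : (m - 2 * l = 0)%N by lia.
by rewrite !scale0r scaler0 addr0.
Qed.

Lemma vform (C : numClosedFieldType) (N : nat) (beta : nat -> C)
  (hpos : forall n : nat, (n < N)%N -> 0 < beta n)
  (hzero : forall s : nat, (N <= s)%N -> beta s = 0)
  (A : 'M[C]_(N.+1))
  (hA0 : A *m Psi N 0 = 0)
  (hA : forall n : nat, (n < N)%N ->
          A *m Psi N n.+1 = sqrtC (beta n) *: Psi N n) k :
  adjoint A ^+ k *m Psi N 0 =
  if (k <= N)%N then (\prod_(j < k) sqrtC (beta j)) *: Psi N k else 0.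
Proof.
elim: k => [|k IH]; first by rewrite expr0 mul1mx big_ord0 scale1r.
rewrite exprS -mulmxA IH.
case: (ltnP k N) => hk.
  rewrite (ltnW hk) -scalemxAr (Bpsi hpos hzero hA0 hA (ltnW hk)).
  by rewrite scalerA big_ord_recr.
case: (eqVneq k N) => [->|hkN].
  rewrite leqnn -scalemxAr (Bpsi hpos hzero hA0 hA) //.
  by rewrite hzero // sqrtC0 !scale0r scaler0.
have -> : (k <= N)%N = false by lia.
by rewrite mulmx0.
Qed.

Lemma Av (C : numClosedFieldType) (N : nat) (beta : nat -> C)
  (hpos : forall n : nat, (n < N)%N -> 0 < beta n)
  (hzero : forall s : nat, (N <= s)%N -> beta s = 0)
  (A : 'M[C]_(N.+1))
  (hA0 : A *m Psi N 0 = 0)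
  (hA : forall n : nat, (n < N)%N ->
          A *m Psi N n.+1 = sqrtC (beta n) *: Psi N n) k :
  A *m (adjoint A ^+ k *m Psi N 0) =
  Avf beta (fun j => adjoint A ^+ j *m Psi N 0) k.
Proof.
case: k => [|k]; first by rewrite expr0 mul1mx hA0.
rewrite /= !(vform hpos hzero hA0 hA).
case: (ltnP k N) => hk.
  rewrite -scalemxAr hA // !scalerA big_ord_recr /=.
  by rewrite (ltnW hk) scalerA -mulrA -expr2 sqrtCK mulrC.
by rewrite hzero // mulmx0 scale0r.
Qed.

Lemma claim (C : numClosedFieldType) (N : nat) (beta : nat -> C)
  (hpos : forall n : nat, (n < N)%N -> 0 < beta n)
  (hzero : forall s : nat, (N <= s)%N -> beta s = 0)
  (A : 'M[C]_(N.+1))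
  (hA0 : A *m Psi N 0 = 0)
  (hA : forall n : nat, (n < N)%N ->
          A *m Psi N n.+1 = sqrtC (beta n) *: Psi N n) m K :
  (m < 2 * K)%N ->
  (A + adjoint A) ^+ m *m Psi N 0 =
  \sum_(l < K) gg beta m l *: (adjoint A ^+ (m - 2 * l) *m Psi N 0).
Proof.
set v := fun j => adjoint A ^+ j *m Psi N 0.
have vS : forall j, adjoint A *m v j = v j.+1 by move=> j; rewrite /v exprS mulmxA.
elim: m K => [|m IH] [|K] hK //.
  rewrite big_ord_recl big1 ?addr0.
    by rewrite expr0 mul1mx /gg /= scale1r.
  by move=> i _; rewrite /gg /= scale0r.
rewrite exprS -mulmxA (IH K.+1) ?mulmx_sumr; last by lia.
under eq_bigr => i _ do rewrite -scalemxAr mulmxDl (Av hpos hzero hA0 hA) vS scalerDr.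
rewrite big_split /= big_ord_recr big_ord_recl /= [RHS]big_ord_recl /=.
have -> : gg beta m K *: Avf beta v (m - 2 * K) = 0.
  rewrite /gg; case: (leqP (2 * K) m) => h; last by rewrite scale0r.
  have -> : (m - 2 * K = 0)%N by lia.
  by rewrite /= scaler0.
rewrite addr0 /bump /=.
rewrite [X in _ = _ + X](eq_bigr (fun i : 'I_K => gg beta m i.+1 *: v (m - 2 * i.+1).+1
    + gg beta m i *: Avf beta v (m - 2 * i))); last by move=> i _; rewrite add1n; exact: term.
rewrite big_split /=.

have -> : gg beta m.+1 0 *: (adjoint A ^+ (m.+1 - 2 * 0) *m Psi N 0) = gg beta m 0 *: v (m - 2 * 0).+1.
  by rewrite /gg !muln0 !subn0.
rewrite addrC -!addrA; congr (_ + _); rewrite addrC; congr (_ + _).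
Qed.

Unset Implicit Arguments. Set Strict Implicit.

Theorem theorem1 (C : numClosedFieldType) (N : nat) (beta : nat -> C)
  (hpos : forall n : nat, (n < N)%N -> 0 < beta n)
  (hzero : forall s : nat, (N <= s)%N -> beta s = 0)
  (A : 'M[C]_(N.+1))
  (hA0 : A *m Psi N 0 = 0)
  (hA : forall n : nat, (n < N)%N ->
          A *m Psi N n.+1 = sqrtC (beta n) *: Psi N n)
  (m : nat) :
  (A + adjoint A) ^+ m *m Psi N 0 =
  \sum_(l < (m./2).+1) coef beta m l *: (adjoint A ^+ (m - 2 * l) *m Psi N 0).
Proof.
have hm := odd_double_half m.
rewrite -addnn in hm.
rewrite (claim hpos hzero hA0 hA (K := (m./2).+1)); last by lia.
apply: eq_bigr => [[l hl]] _ /=.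
have hl2 : (2 * l <= m)%N by lia.
by rewrite /gg hl2; case: l {hl hl2}.
Qed.
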